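(* Let $V$ be a finite set and $\{\eta(t),t\ge0\}$ a consistent configuration process on $\Omega$. Then for all $\eta,\xi\in\Omega$ with $1\le|\xi|<|\eta|$ and all $t\ge0$, $$\mathbb E_\eta[F(\xi,\eta(t))]=\frac{1}{|\eta|-|\xi|}\sum_{i\in V}\eta_i\,\mathbb E_{\eta-\delta_i}[F(\xi,\eta(t))].$$
   Context: $\Lambda\subseteq\mathbb N_0$, $\Omega=\{\eta\in\Lambda^V:|\eta|<\infty\}$ with $|\eta|=\sum_x\eta_x$; $\delta_z$ is the configuration with one particle at $z$. $F(\xi,\eta):=\prod_{j\in V}\binom{\eta_j}{\xi_j}$ (with $\binom{a}{b}=0$ for $b>a$). A configuration process is a particle-number-conserving Markov process on $\Omega$ with generator $\mathcal L$; $\mathbb E_\eta$ is expectation started from $\eta$. It is consistent if $[\mathcal L,\mathcal A]=0$, where $\mathcal Af(\eta)=\sum_{x\in V}\eta_xf(\eta-\delta_x)$ (terms with $\eta_x=0$ vanish). *)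

(* Defs.v *)
From HB Require Import structures.
From mathcomp Require Import all_boot all_order all_algebra.
From mathcomp Require Import all_classical all_reals.
From mathcomp Require Import topology normedtype derive.
Import numFieldNormedType.Exports.
Set Implicit Arguments. Unset Strict Implicit. Unset Printing Implicit Defensive.
Import Order.TTheory GRing.Theory Num.Theory.
Local Open Scope ring_scope.

Definition Conf (V : finType) := {ffun V -> nat}.

Definition csize (V : finType) (eta : Conf V) : nat := (\sum_(x : V) eta x)%N.

(* eta in Omega = Lambda^V (finiteness of |eta| is automatic as V is finite) *)
Definition inOmega (V : finType) (Lam : pred nat) (eta : Conf V) : bool :=
  [forall x, Lam (eta x)].

(* eta - delta_z (truncated; only used when eta_z > 0 or with coefficient eta_z = 0) *)
Definition conf_sub (V : finType) (eta : Conf V) (z : V) : Conf V :=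
  [ffun x => (eta x - (x == z))%N].

Definition Fdual (V : finType) (xi eta : Conf V) : nat :=
  (\prod_(j : V) 'C(eta j, xi j))%N.

Definition conf_of (V : finType) (n : nat) (g : {ffun V -> 'I_n.+1}) : Conf V :=
  [ffun x => nat_of_ord (g x)].

(* sum of G over all configurations eta' with |eta'| = n (each counted once) *)
Definition level_sum (R : realType) (V : finType) (n : nat) (G : Conf V -> R) : R :=
  \sum_(g : {ffun V -> 'I_n.+1} | csize (conf_of g) == n) G (conf_of g).

Definition gen (R : realType) (V : finType) (c : Conf V -> Conf V -> R)
  (f : Conf V -> R) (eta : Conf V) : R :=
  level_sum (csize eta) (fun eta' => c eta eta' * (f eta' - f eta)).

Definition opA (R : realType) (V : finType) (f : Conf V -> R) (eta : Conf V) : R :=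
  \sum_(x : V) (eta x)%:R * f (conf_sub eta x).

(* Lambda is downward closed, so that eta - delta_x stays in Omega *)
Definition down_closed (Lam : pred nat) : Prop := forall n, Lam n.+1 -> Lam n.

(* Valid jump rates of a configuration process on Omega:
   nonnegative off-diagonal rates, no jumps leaving Omega.  (Conservation of the
   particle number is built into [gen], which only sums over the same level.) *)
Definition valid_rates (R : realType) (V : finType) (Lam : pred nat)
  (c : Conf V -> Conf V -> R) : Prop :=
  (forall eta eta', eta != eta' -> 0 <= c eta eta') /\
  (forall eta eta', inOmega Lam eta -> ~~ inOmega Lam eta' -> c eta eta' = 0).

(* P t eta eta' = P_eta(eta(t) = eta') is the transition function of the Markov
   process with generator [gen c]: the solution of Kolmogorov's backward equation
   d/dt P_t = L P_t with P_0 = Id (on each finite level this is P_t = exp(tL)). *)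
Definition transition_function (R : realType) (V : finType) (Lam : pred nat)
  (c : Conf V -> Conf V -> R) (P : R -> Conf V -> Conf V -> R) : Prop :=
  (forall eta eta', P 0 eta eta' = (eta == eta')%:R) /\
  (forall eta eta' (t : R), inOmega Lam eta ->
     is_derive (t : R^o) (1 : R^o) (fun s : R^o => (P s eta eta' : R^o)) (gen c (fun e => P t e eta') eta)).

Definition Expect (R : realType) (V : finType) (P : R -> Conf V -> Conf V -> R)
  (t : R) (eta : Conf V) (f : Conf V -> R) : R :=
  level_sum (csize eta) (fun eta' => P t eta eta' * f eta').

Definition consistent (R : realType) (V : finType) (Lam : pred nat)
  (c : Conf V -> Conf V -> R) : Prop :=
  forall (f : Conf V -> R) eta, inOmega Lam eta ->
    gen c (opA f) eta = opA (gen c f) eta.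

(* Main.v *)
Require Import Defs.
From HB Require Import structures.
From mathcomp Require Import all_boot all_order all_algebra.
From mathcomp Require Import all_classical all_reals.
From mathcomp Require Import topology normedtype derive sequences realfun exp.
From mathcomp Require Import ring lra.
Import Order.TTheory GRing.Theory Num.Theory.
Import numFieldNormedType.Exports.
Local Open Scope ring_scope.
Local Open Scope classical_set_scope.

Set Implicit Arguments. Unset Strict Implicit.
Section G.
Variable R : realType.
Implicit Types (f g : R -> R) (t df dg : R).

Lemma dM f g t df dg : is_derive (t : R^o) (1 : R^o) (f : R^o -> R^o) df ->
  is_derive (t : R^o) (1 : R^o) (g : R^o -> R^o) dg ->
  is_derive (t : R^o) (1 : R^o) ((fun s => f s * g s) : R^o -> R^o) (f t * dg + g t * df).
Proof. move=> H1 H2; exact: (is_deriveM H1 H2). Qed.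

Lemma dB f g t df dg : is_derive (t : R^o) (1 : R^o) (f : R^o -> R^o) df ->
  is_derive (t : R^o) (1 : R^o) (g : R^o -> R^o) dg ->
  is_derive (t : R^o) (1 : R^o) ((fun s => f s - g s) : R^o -> R^o) (df - dg).
Proof. move=> H1 H2; exact: (is_deriveB H1 H2). Qed.

Lemma dC (a : R) t : is_derive (t : R^o) (1 : R^o) ((fun _ => a) : R^o -> R^o) 0.
Proof. exact: is_derive_cst. Qed.

Lemma dI t : is_derive (t : R^o) (1 : R^o) ((fun s => s) : R^o -> R^o) 1.
Proof. exact: is_derive_id. Qed.

Lemma dext f g t df : (forall s, f s = g s) -> is_derive (t : R^o) (1 : R^o) (f : R^o -> R^o) df ->
  is_derive (t : R^o) (1 : R^o) (g : R^o -> R^o) df.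
Proof. by move=> /funext ->. Qed.

Lemma dval f t df df' : df = df' -> is_derive (t : R^o) (1 : R^o) (f : R^o -> R^o) df ->
  is_derive (t : R^o) (1 : R^o) (f : R^o -> R^o) df'.
Proof. by move=> ->. Qed.

Lemma dsum (I : eqType) (r : seq I) (P : pred I) (F : I -> R -> R) (dF : I -> R) t :
  (forall i, P i -> is_derive (t : R^o) (1 : R^o) (F i : R^o -> R^o) (dF i)) ->
  is_derive (t : R^o) (1 : R^o) ((fun s => \sum_(i <- r | P i) F i s) : R^o -> R^o)
    (\sum_(i <- r | P i) dF i).
Proof.
move=> H; elim: r => [|a r IH].
  by apply: (@dext (fun _ => 0)); [move=> s; rewrite big_nil | rewrite big_nil; exact: dC].
case Pa: (P a).
  apply: (@dext (fun s => F a s + \sum_(i <- r | P i) F i s)).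
    by move=> s; rewrite big_cons Pa.
  rewrite big_cons Pa; exact: (is_deriveD (H a Pa) IH).
apply: (@dext (fun s => \sum_(i <- r | P i) F i s)).
  by move=> s; rewrite big_cons Pa.
by rewrite big_cons Pa.
Qed.

Lemma derive_expNK (K s : R) :
  is_derive (s : R^o) (1 : R^o) ((fun u => expR (- (K * u))) : R^o -> R^o) (expR (- (K * s)) * - K).
Proof.
have h1 : is_derive (s : R^o) (1 : R^o) ((fun u => - (K * u)) : R^o -> R^o) (- K).
  apply: (@dval _ _ (0 - (K * 1 + s * 0))); first by rewrite mulr1 mulr0 addr0 sub0r.
  apply: (@dext (fun u => 0 - K * u)); first by move=> u; rewrite sub0r.
exact: (is_derive1_comp (is_derive_expR _) h1).
Qed.

Lemma gronwall0 (phi dphi : R -> R) (K : R) :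
  (forall s, is_derive (s : R^o) (1 : R^o) (phi : R^o -> R^o) (dphi s)) ->
  (forall s, dphi s <= K * phi s) -> phi 0 = 0 -> forall t, 0 <= t -> phi t <= 0.
Proof.
move=> Hd Hle H0 t t0.
pose psi := fun s => expR (- (K * s)) * phi s.
have Dpsi s : is_derive (s : R^o) (1 : R^o) (psi : R^o -> R^o)
    (expR (- (K * s)) * (dphi s - K * phi s)).
  have h := dM (derive_expNK K s) (Hd s).
  apply: (dval _ h); ring.
have : psi t <= psi 0.
  apply: (@ler0_derive1_nincr _ psi 0 t) => //.
  - move=> x _; rewrite derive1E; case: (Dpsi x) => _ ->.
    by rewrite mulr_ge0_le0 ?expR_ge0 // subr_le0.
  - by apply: derivable_within_continuous => x _; case: (Dpsi x).
rewrite /psi H0 mulr0 => h.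
by rewrite -(pmulr_rle0 _ (expR_gt0 (- (K * t)))).
Qed.

End G.
Section Comb.
Variable V : finType.

Lemma Fdual_sub (xi e : Conf V) x :
  (e x * Fdual xi (conf_sub e x) = (e x - xi x) * Fdual xi e)%N.
Proof.
rewrite /Fdual (bigD1 x) //= [in RHS](bigD1 x) //= ffunE eqxx subn1.
rewrite mulnA mul_bin_down -mulnA; congr (_ * (_ * _))%N.
by apply: eq_bigr => j /negbTE jx; rewrite ffunE jx subn0.
Qed.

Lemma opA_nat (xi e : Conf V) : (csize xi <= csize e)%N ->
  (\sum_x e x * Fdual xi (conf_sub e x) = (csize e - csize xi) * Fdual xi e)%N.
Proof.
move=> le.
under eq_bigr do rewrite Fdual_sub.
rewrite -big_distrl /=.
case: (boolP [forall x, (xi x <= e x)%N]) => [/forallP H|/forallP H].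
  by rewrite /csize sumnB.
have [x Hx] : exists x, ~~ (xi x <= e x)%N.
  by apply/existsP; move/forallP: H; rewrite negb_forall.
have -> : Fdual xi e = 0%N.
  by rewrite /Fdual (bigD1 x) //= bin_small ?mul0n // ltnNge.
by rewrite !muln0.
Qed.
End Comb.


Section Markov.
Variable R : realType.
Variable V : finType.
Variable Lam : pred nat.
Variable c : Conf V -> Conf V -> R.
Variable P : R -> Conf V -> Conf V -> R.
Local Open Scope ring_scope.

Definition enc n (e : Conf V) : {ffun V -> 'I_n.+1} := [ffun x => inord (e x)].

Lemma le_csize (e : Conf V) x : (e x <= csize e)%N.
Proof. by rewrite /csize (bigD1 x) //= leq_addr. Qed.

Lemma conf_of_enc n (e : Conf V) : csize e = n -> conf_of (enc n e) = e.
Proof.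
move=> He; apply/ffunP => x; rewrite !ffunE inordK // ltnS -He; exact: le_csize.
Qed.

Lemma conf_of_inj n : injective (@conf_of V n).
Proof.
move=> g h /ffunP E; apply/ffunP => x; apply/val_inj; have := E x; by rewrite !ffunE.
Qed.

Lemma level_sum_delta n (g : Conf V -> R) (e : Conf V) : csize e = n ->
  level_sum n (fun e' => (e == e')%:R * g e') = g e.
Proof.
move=> He; rewrite /level_sum (bigD1 (enc n e)) /=; last by rewrite conf_of_enc // He.
rewrite conf_of_enc // eqxx mul1r big1 ?addr0 // => h /andP[_ hne].
case: eqP => [Eh|]; last by rewrite mul0r.
by move: hne; rewrite (@conf_of_inj n h (enc n e)) ?eqxx // conf_of_enc.
Qed.

Lemma gen_sub (g1 g2 : Conf V -> R) e :
  gen c (fun z => g1 z - g2 z) e = gen c g1 e - gen c g2 e.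
Proof.
rewrite /gen /level_sum -sumrB; apply: eq_bigr => h _; ring.
Qed.

Lemma gen_loc (g1 g2 : Conf V -> R) e :
  (forall z, csize z = csize e -> g1 z = g2 z) -> gen c g1 e = gen c g2 e.
Proof.
move=> H; rewrite /gen /level_sum; apply: eq_bigr => h /eqP Hh.
by rewrite !H.
Qed.

Lemma swap_gen (h : Conf V -> R) t e :
  level_sum (csize e) (fun y => gen c (fun z => P t z y) e * h y)
  = gen c (fun z => Expect P t z h) e.
Proof.
rewrite /gen /Expect /level_sum.
under eq_bigr do rewrite mulr_suml.
rewrite exchange_big; apply: eq_bigr => gz /eqP Hz.
rewrite Hz -sumrB mulr_sumr; apply: eq_bigr => gy _; ring.
Qed.

Hypothesis tf : transition_function Lam c P.

Lemma Expect0 h e : Expect P 0 e h = h e.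
Proof.
rewrite /Expect.
transitivity (level_sum (csize e) (fun e' => (e == e')%:R * h e')).
  by rewrite /level_sum; apply: eq_bigr => g _; rewrite tf.1.
exact: level_sum_delta.
Qed.

Lemma D_Expect h e t : inOmega Lam e ->
  is_derive (t : R^o) (1 : R^o) ((fun s => Expect P s e h) : R^o -> R^o)
    (gen c (fun z => Expect P t z h) e).
Proof.
move=> eO; rewrite -swap_gen /Expect /level_sum.
apply: dsum => g _.
have := dM (tf.2 e (conf_of g) t eO) (dC (h (conf_of g)) t).
by apply: dval; rewrite /=; ring.
Qed.

End Markov.

Lemma key_ineq (R : realType) (a b k phi : R) : a ^+ 2 <= phi -> b ^+ 2 <= phi ->
  2 * a * k * (b - a) <= 4 * `|k| * phi.
Proof.
move=> ha hb.
have h1 : 2 * a * (b - a) <= 4 * phi by nra.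
have h2 : - (2 * a * (b - a)) <= 4 * phi by nra.
have -> : 2 * a * k * (b - a) = k * (2 * a * (b - a)) by ring.
have -> : 4 * `|k| * phi = `|k| * (4 * phi) by ring.
case: (lerP 0 k) => hk.
  by rewrite ger0_norm // ler_wpM2l.
rewrite ltr0_norm // -mulrNN; apply: ler_wpM2l => //; lra.
Qed.

Section Uniq.
Variable R : realType.
Variable V : finType.
Variable Lam : pred nat.
Variable c : Conf V -> Conf V -> R.
Local Open Scope ring_scope.
Hypothesis vr : valid_rates Lam c.

Lemma uniq0 (D : R -> Conf V -> R) :
  (forall e t, inOmega Lam e -> is_derive (t : R^o) (1 : R^o) ((fun s => D s e) : R^o -> R^o) (gen c (D t) e)) ->
  (forall e, inOmega Lam e -> D 0 e = 0) ->
  forall t e, 0 <= t -> inOmega Lam e -> D t e = 0.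
Proof.
move=> Hd H0 t e t0 eO.
set n := csize e.
pose Q := fun g : {ffun V -> 'I_n.+1} => (csize (conf_of g) == n) && inOmega Lam (conf_of g).
pose phi s := \sum_(g | Q g) D s (conf_of g) * D s (conf_of g).
pose dphi s := \sum_(g | Q g) (D s (conf_of g) * gen c (D s) (conf_of g) + D s (conf_of g) * gen c (D s) (conf_of g)).
pose K := 4 * \sum_(g | Q g) \sum_(h | Q h) `|c (conf_of g) (conf_of h)|.
have Hphi s : is_derive (s : R^o) (1 : R^o) (phi : R^o -> R^o) (dphi s).
  apply: dsum => g /andP[_ gO].
  exact: (dM (Hd _ s gO) (Hd _ s gO)).
have sq_le s g : Q g -> D s (conf_of g) ^+ 2 <= phi s.
  move=> Qg; rewrite /phi (bigD1 g) //= expr2 lerDl.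
  by apply: sumr_ge0 => h _; rewrite -expr2 sqr_ge0.
have gen_r s g : Q g -> gen c (D s) (conf_of g) =
    \sum_(h | Q h) c (conf_of g) (conf_of h) * (D s (conf_of h) - D s (conf_of g)).
  move=> /andP[/eqP gn gO]; rewrite /gen /level_sum gn.
  rewrite (bigID (fun h => inOmega Lam (conf_of h))) /= [X in _ + X]big1 ?addr0 //.
  by move=> h /andP[_ hO]; rewrite (vr.2 _ _ gO hO) mul0r.
have Hle s : dphi s <= K * phi s.
  have -> : K * phi s = \sum_(g | Q g) \sum_(h | Q h) (4 * `|c (conf_of g) (conf_of h)| * phi s).
    rewrite /K -mulrA big_distrl /= mulr_sumr; apply: eq_bigr => g _.
    rewrite big_distrl /= mulr_sumr; apply: eq_bigr => h _; ring.
  apply: ler_sum => g Qg; rewrite gen_r // -mulrDl mulr_sumr.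
  apply: ler_sum => h Qh.
  have := key_ineq (c (conf_of g) (conf_of h)) (sq_le s g Qg) (sq_le s h Qh).
  apply: le_trans; rewrite le_eqVlt; apply/orP; left; apply/eqP; ring.
have phi0 : phi 0 = 0.
  by rewrite /phi big1 // => g /andP[_ gO]; rewrite H0 // mulr0.
have := gronwall0 Hphi Hle phi0 t0.
have Qe : Q (enc n e) by rewrite /Q conf_of_enc // eqxx eO.
move=> /(le_trans (sq_le t _ Qe)); rewrite conf_of_enc // => h.
have : D t e ^+ 2 = 0 by apply/le_anti; rewrite h sqr_ge0.
by move/eqP; rewrite expf_eq0 /= => /eqP.
Qed.
End Uniq.

Theorem proposition3p6 (R : realType) (V : finType) (Lam : pred nat)
  (c : Conf V -> Conf V -> R) (P : R -> Conf V -> Conf V -> R) :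
  down_closed Lam ->
  valid_rates Lam c ->
  transition_function Lam c P ->
  consistent Lam c ->
  forall (eta xi : Conf V) (t : R),
    inOmega Lam eta -> inOmega Lam xi ->
    (1 <= csize xi)%N -> (csize xi < csize eta)%N -> 0 <= t ->
    Expect P t eta (fun e => (Fdual xi e)%:R)
    = ((csize eta - csize xi)%N%:R)^-1 *
      \sum_(i : V) (eta i)%:R * Expect P t (conf_sub eta i) (fun e => (Fdual xi e)%:R).
Proof.
move=> dc vr tf cons eta xi t etaO xiO h1 hlt t0.
pose Fr := fun e : Conf V => (Fdual xi e)%:R : R.
pose U := fun s e => Expect P s e (opA Fr).
pose W := fun s e => Expect P s e Fr.
pose Vf := fun s e => opA (W s) e.
pose D := fun s e => U s e - Vf s e.
have sub_in : forall (e : Conf V) (x : V), inOmega Lam e -> inOmega Lam (conf_sub e x).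
  move=> e x eO0; have eO : forall y, Lam (e y) := fun y => (elimT forallP eO0 y).
  apply/forallP => y; rewrite ffunE.
  case: (y == x) => /=; last by rewrite subn0; exact: eO.
  case E: (e y) => [|k] /=; first by have := eO y; rewrite E.
  by rewrite subn1 /=; apply: dc; rewrite -E; exact: eO.
have HD : forall e (s : R^o), inOmega Lam e ->
    is_derive (s : R^o) (1 : R^o) ((fun r => D r e) : R^o -> R^o) (gen c (D s) e).
  move=> e s eO.
  have hU := D_Expect tf (opA Fr) s eO.
  have hV : is_derive (s : R^o) (1 : R^o) ((fun r => Vf r e) : R^o -> R^o) (gen c (Vf s) e).
    rewrite /Vf /opA.
    have := @dsum R V (index_enum V) (fun _ => true) _ _ s
      (fun x _ => dM (dC (e x)%:R s) (D_Expect tf Fr s (sub_in e x eO))).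
    apply: dval.
    rewrite cons //= /opA; apply: eq_bigr => x _; ring.
  have := dB hU hV.
  by apply: dval; rewrite gen_sub.
have HD0 : forall e, inOmega Lam e -> D 0 e = 0.
  move=> e _; rewrite /D /U /Vf /W (Expect0 tf) /opA.
  apply/eqP; rewrite subr_eq0; apply/eqP; apply: eq_bigr => x _; by rewrite (Expect0 tf).
have := uniq0 vr HD HD0 t0 etaO.
rewrite /D /U /Vf /W => /eqP; rewrite subr_eq0 => /eqP HUV.
have opAF y : (csize xi <= csize y)%N -> opA Fr y = (csize y - csize xi)%N%:R * Fr y.
  move=> le; rewrite /opA /Fr.
  under eq_bigr do rewrite -natrM.
  by rewrite -natr_sum opA_nat // natrM.
have HU : Expect P t eta (opA Fr) = (csize eta - csize xi)%N%:R * Expect P t eta Fr.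
  rewrite /Expect /level_sum mulr_sumr; apply: eq_bigr => g /eqP Hg.
  rewrite opAF; last by rewrite Hg ltnW.
  rewrite Hg; ring.
rewrite /opA in HUV.
rewrite -HUV HU mulKf //.
by rewrite pnatr_eq0 subn_eq0 -ltnNge.
Qed.
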